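(* Let $K\subseteq\mathbb{R}^n$ be a proper cone and $A\in\mathbb{R}^{n\times n}$ nonsingular, $b\in\mathbb{R}^n$. Let $A=U-V$ be a convergent $K$-regular splitting and let $U=F-G$ be a convergent $K$-weak regular splitting of type II such that $VF^{-1}G=GF^{-1}V$. Then for any sequence of positive integers $s(k)\geq 1$, $k=0,1,2,\ldots$, and any initial vector $x_0$, the non-stationary two-stage iteration $$x_{k+1}=(F^{-1}G)^{s(k)}x_{k}+\sum_{j=0}^{s(k)-1}(F^{-1}G)^{j}F^{-1}(Vx_{k}+b),\qquad k=0,1,2,\ldots,$$ converges (to $A^{-1}b$).
   Context: A proper cone $K\subseteq\mathbb{R}^n$ is a closed, convex, pointed, solid cone. For $M\in\mathbb{R}^{n\times n}$, $M\geq_K 0$ means $MK\subseteq K$. A splitting $A=U-V$ (with $U$ nonsingular) is $K$-regular if $U^{-1}\geq_K 0$ and $V\geq_K 0$; it is a $K$-weak regular splitting of type II if $U^{-1}\geq_K 0$ and $VU^{-1}\geq_K 0$. A splitting is convergent if $\rho(U^{-1}V)<1$, $\rho$ denoting spectral radius. *)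

(* Defs.v *)
From HB Require Import structures.
From mathcomp Require Import all_boot all_order all_algebra.
From mathcomp Require Import all_classical all_reals all_analysis.
From mathcomp Require Import complex.

Set Implicit Arguments.
Unset Strict Implicit.
Unset Printing Implicit Defensive.

Import Order.TTheory GRing.Theory Num.Theory numFieldTopology.Exports numFieldNormedType.Exports.
Local Open Scope ring_scope.
Local Open Scope classical_set_scope.

Section Defs.
Variables (R : realType) (n : nat).

Definition is_cone (K : set 'cV[R]_n) : Prop :=
  forall (a : R) (x : 'cV[R]_n), 0 <= a -> K x -> K (a *: x).

Definition is_convex_set (K : set 'cV[R]_n) : Prop :=
  forall (t : R) (x y : 'cV[R]_n), 0 <= t -> t <= 1 -> K x -> K y ->
    K (t *: x + (1 - t) *: y).

Definition is_pointed (K : set 'cV[R]_n) : Prop :=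
  forall x : 'cV[R]_n, K x -> K (- x) -> x = 0.

Definition is_solid (K : set 'cV[R]_n) : Prop := (interior K) !=set0.

Definition proper_cone (K : set 'cV[R]_n) : Prop :=
  [/\ is_cone K, closed K, is_convex_set K, is_pointed K & is_solid K].

Definition K_nonneg (K : set 'cV[R]_n) (M : 'M[R]_n) : Prop :=
  forall x : 'cV[R]_n, K x -> K (M *m x).

Definition spectral_radius_lt1 (M : 'M[R]_n) : Prop :=
  forall l : complex R, eigenvalue (map_mx (fun r : R => Complex r 0) M) l -> `|l| < 1.

Definition K_regular_splitting (K : set 'cV[R]_n) (A U V : 'M[R]_n) : Prop :=
  [/\ A = U - V, U \in unitmx, K_nonneg K (invmx U) & K_nonneg K V].

Definition K_weak_regular_splitting_II (K : set 'cV[R]_n) (A U V : 'M[R]_n) : Prop :=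
  [/\ A = U - V, U \in unitmx, K_nonneg K (invmx U) & K_nonneg K (V *m invmx U)].

Definition convergent_splitting (U V : 'M[R]_n) : Prop :=
  spectral_radius_lt1 (invmx U *m V).

End Defs.

(* Main.v *)
Require Import Defs.
From HB Require Import structures.
From mathcomp Require Import all_boot all_order all_algebra.
From mathcomp Require Import all_classical all_reals all_analysis.
From mathcomp Require Import complex.
From mathcomp Require Import ring lra.
Set Implicit Arguments.
Unset Strict Implicit.
Unset Printing Implicit Defensive.
Import Order.TTheory GRing.Theory Num.Theory numFieldTopology.Exports numFieldNormedType.Exports.
Local Open Scope ring_scope.
Local Open Scope classical_set_scope.
Section S.
Variable R : realType.

Lemma ev_ex (P : nat -> Prop) : (\forall k \near \oo, P k) -> exists N, forall k, (N <= k)%N -> P k.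
Proof. by move=> [N _ HN]; exists N. Qed.

Lemma ex_ev (P : nat -> Prop) : (exists N, forall k, (N <= k)%N -> P k) -> \forall k \near \oo, P k.
Proof. by move=> [N HN]; exists N. Qed.

Lemma rec_cvg0 (a b : nat -> R) (c : R) : 0 <= c -> c < 1 -> (forall k, 0 <= a k) ->
  (forall k, a k.+1 <= c * a k + b k) -> b @ \oo --> 0 -> a @ \oo --> 0.
Proof.
move=> c0 c1 a0 rec /cvgrPdist_lt bc; apply/cvgrPdist_lt => e e0.
have e1 : 0 < e * (1 - c) / 2 by rewrite divr_gt0 // mulr_gt0 // subr_gt0.
have [N HN] := ev_ex (bc _ e1).
have key : forall m, a (N + m)%N - e / 2 <= c ^+ m * `|a N - e / 2|.
  elim=> [|m IH]; first by rewrite addn0 expr0 mul1r ler_norm.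
  rewrite addnS; apply: le_trans (lerB (rec _) (lexx _)) _.
  have hb : b (N + m)%N <= e * (1 - c) / 2.
    have := HN (N + m)%N (leq_addr _ _); rewrite sub0r normrN => /ltW.
    by apply: le_trans; apply: ler_norm.
  have -> : c ^+ m.+1 * `|a N - e / 2| = c * (c ^+ m * `|a N - e / 2|) by rewrite exprS mulrA.
  apply: le_trans (_ : c * (a (N + m)%N - e / 2) <= _); last by apply: ler_wpM2l.
  set x := a _; set y := b _; move: hb; rewrite -/y => hb.
  have -> : c * (x - e / 2) = c * x + e * (1 - c) / 2 - e / 2 by ring.
  by rewrite lerB // lerD.
have cv : (fun m => c ^+ m * `|a N - e / 2|) @ \oo --> 0.
  rewrite -(mul0r `|a N - e / 2|); apply: cvgM; [apply: cvg_expr | exact: cvg_cst].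
  by rewrite ger0_norm.
have e2 : 0 < e / 2 by rewrite divr_gt0.
move/cvgrPdist_lt: cv => /(_ _ e2) /ev_ex [M HM].
apply: ex_ev; exists (N + M)%N => k Hk.
have -> : k = (N + (k - N))%N by rewrite subnKC // (leq_trans (leq_addr M N)).
rewrite sub0r normrN ger0_norm //.
have : (M <= k - N)%N by rewrite leq_subRL ?(leq_trans (leq_addr M N)).
move/HM; rewrite sub0r normrN => h.
have := key (k - N)%N; move: h; set u := c ^+ _ * _; set v := a _.
have : 0 <= u by rewrite mulr_ge0 // exprn_ge0.
move=> u0 h1 h2.
have : `|u| = u by rewrite ger0_norm.
move=> hu; rewrite hu in h1. lra.
Qed.
Definition ncv m (v : 'cV[R[i]]_m) : R := \sum_i Normc.normc (v i 0).
Lemma ncv_ge0 m (v : 'cV[R[i]]_m) : 0 <= ncv v.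
Proof. by apply: sumr_ge0 => i _; case: (v i 0) => a b; exact: sqrtr_ge0. Qed.
Lemma ncvD m (v w : 'cV[R[i]]_m) : ncv (v + w) <= ncv v + ncv w.
Proof. by rewrite /ncv -big_split /=; apply: ler_sum => i _; rewrite mxE; exact: le_normcD. Qed.
Lemma ncvZ m z (v : 'cV[R[i]]_m) : ncv (z *: v) = Normc.normc z * ncv v.
Proof. by rewrite /ncv mulr_sumr; apply: eq_bigr => i _; rewrite mxE Normc.normcM. Qed.
Lemma ncv0 m : ncv (0 : 'cV[R[i]]_m) = 0.
Proof. by rewrite /ncv big1 // => i _; rewrite mxE Normc.normc0. Qed.
Lemma normc_real (r : R) : Normc.normc (r%:C)%C = `|r|.
Proof. by rewrite /Normc.normc /= expr0n /= addr0 sqrtr_sqr. Qed.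
Lemma norm_le_ncv m (w : 'cV[R]_m) : `|w| <= ncv (map_mx (real_complex R) w).
Proof.
change (mx_norm w <= ncv (map_mx (real_complex R) w)); rewrite mx_normrE; apply: bigmax_le; first exact: ncv_ge0.
move=> [i j] _ /=; rewrite /ncv (bigD1 i) //= mxE normc_real (ord1 j).
by rewrite lerDl; apply: sumr_ge0 => k _; case: (_ k 0) => a b; exact: sqrtr_ge0.
Qed.
Lemma normC_lt1 (l : R[i]) : `|l| < 1 -> Normc.normc l < 1.
Proof. by case: l => a b; rewrite normc_def /= -ltcR. Qed.
Lemma mxcomm_scal m (a : R[i]) (A : 'M[R[i]]_m.+1) : GRing.comm A a%:M.
Proof. by rewrite /GRing.comm -!mulmxE scalar_mxC. Qed.

Lemma claim_roots m (C : 'M[R[i]]_m.+1) (s : seq R[i]) :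
  (forall z, z \in s -> Normc.normc z < 1) -> forall v : 'cV_m.+1,
  (\prod_(z <- s) (C - z%:M)) *m v = 0 -> (fun k => ncv (C ^+ k *m v)) @ \oo --> 0.
Proof.
elim: s => [|z s IH] Hs v Hv.
  rewrite big_nil mul1mx in Hv; rewrite Hv.
  under eq_fun do rewrite mulmx0 ncv0. exact: cvg_cst.
pose w := (C - z%:M) *m v.
have Hw : (\prod_(z <- s) (C - z%:M)) *m w = 0.
  rewrite /w mulmxA mulmxE.
  have -> : \prod_(z0 <- s) (C - z0%:M) * (C - z%:M) = (C - z%:M) * \prod_(z0 <- s) (C - z0%:M).
    apply/esym/commr_prod => i _.
    have h1 : GRing.comm (C - z%:M) C.
      by apply/commr_sym/commrB; [exact: commr_refl | exact: mxcomm_scal].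
    apply: commrB => //; apply/commr_sym/commrB; [exact/commr_sym/mxcomm_scal|].
    by rewrite /GRing.comm -!mulmxE -!scalar_mxM mulrC.
  by move: Hv; rewrite big_cons -mulmxE.
have := IH (fun y hy => Hs y (mem_behead (s := z :: s) hy)) w Hw => hb.
have hz : Normc.normc z < 1 by apply: Hs; rewrite inE eqxx.
apply: (rec_cvg0 (c := Normc.normc z) _ hz _ _ hb).
- by case: (z) => a b; exact: sqrtr_ge0.
- by move=> k; apply: ncv_ge0.
move=> k.
have -> : C ^+ k.+1 *m v = z *: (C ^+ k *m v) + C ^+ k *m w.
  rewrite /w mulmxBl mulmxBr mul_scalar_mx -scalemxAr exprSr -mulmxE mulmxA.
  by rewrite addrC subrK.
by rewrite addrC; apply: le_trans (ncvD _ _) _; rewrite ncvZ addrC.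
Qed.
Lemma squeeze0 (V : normedModType R) (u : nat -> V) (al : nat -> R) :
  (forall k, `|u k| <= al k) -> al @ \oo --> 0 -> u @ \oo --> 0.
Proof.
move=> hb /cvgrPdist_lt ha; apply/cvgrPdist_lt => e e0.
apply: filterS (ha e e0) => k; rewrite !sub0r !normrN => h.
by apply: le_lt_trans (hb k) (le_lt_trans (ler_norm _) h).
Qed.

Lemma map_pow m (M : 'M[R]_m.+1) (x : 'cV[R]_m.+1) k :
  map_mx (real_complex R) (M ^+ k *m x) = (map_mx (real_complex R) M) ^+ k *m map_mx (real_complex R) x.
Proof.
elim: k => [|k IH]; first by rewrite !expr0 !mul1mx.
by rewrite !exprS -!mulmxE -!mulmxA map_mxM IH.
Qed.

Lemma spectral n (M : 'M[R]_n) : spectral_radius_lt1 M -> forall x : 'cV[R]_n,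
  (fun k => M ^+ k *m x) @ \oo --> (0 : 'cV[R]_n).
Proof.
case: n M => [|m] M HM x.
  have -> : x = 0 by apply/matrixP => -[].
  under eq_fun do rewrite mulmx0. exact: cvg_cst.
pose C := map_mx (real_complex R) M.
have [r Hr] := closed_field_poly_normal (char_poly C).
have lc : lead_coef (char_poly C) = 1 by apply/monicP/char_poly_monic.
rewrite lc scale1r in Hr.
have Hroots : forall z, z \in r -> Normc.normc z < 1.
  move=> z hz; apply: normC_lt1; apply: HM.
  by rewrite eigenvalue_root_char -/C Hr root_prod_XsubC.
have H0 : \prod_(z <- r) (C - z%:M) = 0.
  have := Cayley_Hamilton C; rewrite Hr rmorph_prod => <-.
  by apply: eq_bigr => z _; rewrite rmorphB /= horner_mx_X horner_mx_C.
have Hz : \prod_(z <- r) (C - z%:M) *m map_mx (real_complex R) x = 0 by rewrite H0 mul0mx.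
have := @claim_roots m C r Hroots _ Hz.
apply: squeeze0 => k; rewrite -map_pow; exact: norm_le_ncv.
Qed.
Lemma inj_unit n (A : 'M[R]_n) : (forall v : 'cV_n, A *m v = 0 -> v = 0) -> A \in unitmx.
Proof.
move=> h; rewrite -unitmx_tr -row_free_unit; apply: inj_row_free => v hv.
have : A *m v^T = 0 by rewrite -(trmxK (A *m v^T)) trmx_mul trmxK hv trmx0.
by move/h => /(congr1 trmx); rewrite trmxK trmx0.
Qed.

Lemma cst_cvg_eq (V : normedModType R) (v w : V) : (fun _ : nat => v) @ \oo --> w -> v = w.
Proof.
move=> h; apply: (norm_cvg_unique (F := (fun _ : nat => v) @ \oo)) => //.
exact: cvg_cst.
Qed.

Lemma addK n (K : set 'cV[R]_n) : is_cone K -> is_convex_set K -> forall x y, K x -> K y -> K (x + y).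
Proof.
move=> hc hv x y hx hy.
have h2 : (0 : R) <= 2^-1 by rewrite invr_ge0.
have h3 : (2^-1 : R) <= 1 by rewrite invf_le1 // ler1n.
have := hc 2 _ (ler0n _ 2) (hv 2^-1 x y h2 h3 hx hy).
have -> : (1 - 2^-1 : R) = 2^-1 by rewrite {1}(splitr 1) mul1r addrK.
by rewrite scalerDr !scalerA divff ?pnatr_eq0 // !scale1r.
Qed.

Lemma sumK n (K : set 'cV[R]_n) : is_cone K -> is_convex_set K -> K 0 ->
  forall k (f : 'I_k -> 'cV[R]_n), (forall j, K (f j)) -> K (\sum_(j < k) f j).
Proof.
move=> hc hv h0; elim=> [|k IH] f hf; first by rewrite big_ord0.
by rewrite big_ord_recr /=; apply: addK => //; apply: IH.
Qed.

Lemma powK n (K : set 'cV[R]_n) (M : 'M[R]_n) : K_nonneg K M -> forall k, K_nonneg K (M ^+ k).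
Proof.
move=> hM; elim=> [|k IH] x hx; first by rewrite expr0 mul1mx.
by rewrite exprS -mulmxE -mulmxA; apply: hM; apply: IH.
Qed.

Lemma neumann n (K : set 'cV[R]_n) (M : 'M[R]_n) : closed K -> is_cone K -> is_convex_set K -> K 0 ->
  K_nonneg K M -> (forall x, (fun k => M ^+ k *m x) @ \oo --> (0 : 'cV[R]_n)) ->
  (1 - M) \in unitmx /\ K_nonneg K (invmx (1 - M)).
Proof.
move=> hcl hc hv h0 hM hlim.
have hu : (1 - M) \in unitmx.
  apply: inj_unit => v hv0.
  have hMv : M *m v = v by move: hv0; rewrite mulmxBl mul1mx => /eqP; rewrite subr_eq0 eq_sym => /eqP.
  have hk : forall k, M ^+ k *m v = v.
    by elim=> [|k IH]; [rewrite expr0 mul1mx | rewrite exprSr -mulmxE -mulmxA hMv].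
  have := hlim v; under eq_fun do rewrite hk.
  exact: cst_cvg_eq.
split=> // x hx; set y := invmx (1 - M) *m x.
have hy : (1 - M) *m y = x by rewrite /y mulmxA mulmxV // mul1mx.
have key : forall k, y - M ^+ k *m y = \sum_(j < k) M ^+ j *m x.
  elim=> [|k IH]; first by rewrite expr0 mul1mx subrr big_ord0.
  rewrite big_ord_recr /= -IH -hy.
  idtac.
  by rewrite mulmxBl mul1mx mulmxBr exprSr -mulmxE -mulmxA addrA subrK.
apply: (closed_cvg (F := \oo) (u_ := fun k => y - M ^+ k *m y)) => //.
  by apply: nearW => k; rewrite key; apply: sumK => // j; apply: powK.
rewrite -[X in _ --> X]subr0; apply: cvgB; [exact: cvg_cst | exact: hlim].
Qed.
End S.

Section T. Variable R : realType. Variable n : nat.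
Lemma closedK (K : set 'cV[R]_n) p : closed K -> (forall e : R, 0 < e -> exists q, K q /\ `|p - q| < e) -> K p.
Proof.
move=> hcl h; apply: hcl. rewrite /closure. 
move=> B /nbhs_ballP [e e0 he].
have [q [Kq hq]] := h e e0.
exists q; split => //; apply: he. rewrite -ball_normE /=. exact: hq.
Qed.
Lemma trmx_norm_le m p (A : 'M[R]_(m,p)) : `|A^T| <= `|A|.
Proof.
change (mx_norm A^T <= mx_norm A); rewrite !mx_normrE.
apply: bigmax_le => [|[i j] _]; first by rewrite -mx_normrE; change (0 <= `|A|); apply: normr_ge0.
by rewrite mxE /=; apply: (le_bigmax _ (fun ij : 'I_m * 'I_p => `|A ij.1 ij.2|) (j, i)).
Qed.
Lemma trmx_cont : continuous (fun A : 'rV[R]_n => A^T).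
Proof.
move=> x; apply/(@cvgrPdist_lt _ _ _ (nbhs x) (nbhs_filter x)) => e e0.
near=> y.
have : `|x - y| < e by near: y; exact: ((@cvgrPdist_lt _ _ _ (nbhs x) (nbhs_filter x) id x).1 cvg_id e e0).
apply: le_lt_trans.
have := trmx_norm_le (x - y); rewrite linearB /=.
by [].
Unshelve. all: by end_near.
Qed.
Lemma trmx_norm m p (A : 'M[R]_(m,p)) : `|A^T| = `|A|.
Proof. by apply/le_anti; rewrite trmx_norm_le /=; have := trmx_norm_le A^T; rewrite trmxK => ->. Qed.

Lemma sphere_compact : compact [set g : 'cV[R]_n | `|g| = 1].
Proof.
have -> : [set g : 'cV[R]_n | `|g| = 1] = [set h^T | h in [set h : 'rV[R]_n | `|h| = 1]].
  apply/seteqP; split => [g hg | _ [h hh <-]] /=.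
  - by exists g^T; rewrite ?trmxK // trmx_norm.
  - by rewrite trmx_norm.
apply: continuous_compact; first exact: continuous_subspaceT trmx_cont.
apply: bounded_closed_compact.
- exists 1; split => // M hM h /= ->; exact: ltW.
- have -> : [set h : 'rV[R]_n | `|h| = 1] = (fun h : 'rV[R]_n => `|h|) @^-1` [set x | x = 1] by [].
  apply: preimage_closed; last exact: closed_eq.
  move=> x _; exact: norm_continuous.
Qed.



Lemma closed_approx (K : set 'cV[R]_n) (g : nat -> 'cV[R]_n) (c : nat -> R) (z p : 'cV[R]_n) :
  closed K -> (forall m, K (c m *: z + g m)) -> (fun m => c m *: z) @ \oo --> (0 : 'cV[R]_n) ->
  cluster (g @ \oo) p -> K p.
Proof.
move=> hcl hK hc clp; apply: closedK => // e e0.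
have e2 : 0 < e / 2 by rewrite divr_gt0.
have [N HN] : exists N, forall k, (N <= k)%N -> `|0 - c k *: z| < e / 2.
  by move/cvgrPdist_lt: hc => /(_ _ e2) /ev_ex.
have FA : (g @ \oo) (g @` [set m | (N <= m)%N]) by exists N => // m hm; exists m.
have [q [[m hm hq] hb]] := clp _ _ FA (nbhsx_ballx p (e/2) e2).
subst q.
exists (c m *: z + g m); split => //.
have := HN m hm; rewrite sub0r normrN => h1.
move: hb; rewrite -ball_normE /= => h2.
have -> : p - (c m *: z + g m) = (p - g m) - c m *: z by rewrite opprD addrA addrAC.
apply: le_lt_trans (ler_normB _ _) _.
by rewrite (splitr e) ltrD.
Qed.

Lemma closed_approxN (K : set 'cV[R]_n) (g : nat -> 'cV[R]_n) (c : nat -> R) (z p : 'cV[R]_n) :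
  closed K -> (forall m, K (c m *: z - g m)) -> (fun m => c m *: z) @ \oo --> (0 : 'cV[R]_n) ->
  cluster (g @ \oo) p -> K (- p).
Proof.
move=> hcl hK hc clp; apply: closedK => // e e0.
have e2 : 0 < e / 2 by rewrite divr_gt0.
have [N HN] : exists N, forall k, (N <= k)%N -> `|0 - c k *: z| < e / 2.
  by move/cvgrPdist_lt: hc => /(_ _ e2) /ev_ex.
have FA : (g @ \oo) (g @` [set m | (N <= m)%N]) by exists N => // m hm; exists m.
have [q [[m hm hq] hb]] := clp _ _ FA (nbhsx_ballx p (e/2) e2).
subst q.
exists (c m *: z - g m); split => //.
have := HN m hm; rewrite sub0r normrN => h1.
move: hb; rewrite -ball_normE /= => h2.
have -> : - p - (c m *: z - g m) = - (p - g m) - c m *: z by rewrite opprB opprD opprK addrA.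
apply: le_lt_trans (ler_normB _ _) _.
by rewrite normrN (splitr e) ltrD.
Qed.

Lemma order_bound (K : set 'cV[R]_n) (z : 'cV[R]_n) : closed K -> is_cone K -> is_pointed K ->
  exists C : R, 0 < C /\ forall f t, 0 <= t -> K (t *: z + f) -> K (t *: z - f) -> `|f| <= C * t.
Proof.
move=> hcl hc hp; apply: contrapT => H.
have H' : forall m : nat, exists ft : 'cV[R]_n * R, 0 <= ft.2 /\ K (ft.2 *: z + ft.1) /\
    K (ft.2 *: z - ft.1) /\ m.+1%:R * ft.2 < `|ft.1|.
  move=> m; apply: contrapT => hn; apply: H; exists m.+1%:R; split; first exact: ltr0Sn.
  move=> f t ht h1 h2; rewrite leNgt; apply/negP => hlt; apply: hn; exists (f, t); done.
have [ft hft] := choice H'.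
pose f m := (ft m).1; pose t m := (ft m).2.
have fpos : forall m, 0 < `|f m|.
  move=> m; have [h0 [_ [_ h]]] := hft m; apply: le_lt_trans h.
  by rewrite mulr_ge0.
pose g m := `|f m|^-1 *: f m; pose c m := t m / `|f m|.
have gS : forall m, `|g m| = 1.
  by move=> m; rewrite /g normrZ normfV normr_id mulVf // gt_eqF.
have hK1 : forall m, K (c m *: z + g m).
  move=> m; have [h0 [h1 _]] := hft m.
  have hi : 0 <= `|f m|^-1 by rewrite invr_ge0 ltW // fpos.
  have := hc _ _ hi h1.
  by rewrite scalerDr scalerA mulrC.
have hK2 : forall m, K (c m *: z - g m).
  move=> m; have [h0 [_ [h2 _]]] := hft m.
  have hi : 0 <= `|f m|^-1 by rewrite invr_ge0 ltW // fpos.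
  have := hc _ _ hi h2.
  by rewrite scalerBr scalerA mulrC.
have hcz : (fun m => c m *: z) @ \oo --> (0 : 'cV[R]_n).
  apply: (squeeze0 (al := fun m => harmonic m * `|z|)).
    move=> m; rewrite normrZ; apply: ler_wpM2r => //.
    have [h0 [_ [_ h]]] := hft m.
    rewrite ger0_norm ?divr_ge0 // /harmonic /= ler_pdivrMr ?fpos //.
    have ha : (m.+1%:R : R)^-1 * m.+1%:R = 1 by rewrite mulVf // pnatr_eq0.
    have hb : (0 : R) < (m.+1%:R)^-1 by rewrite invr_gt0 ltr0Sn.
    move: ha hb h h0; rewrite /t /f; set a := (m.+1%:R : R)^-1; set M := (m.+1%:R : R).
    move=> ha hb h h0; nra.
  rewrite -(mul0r `|z|); apply: cvgM; [exact: cvg_harmonic | exact: cvg_cst].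
have hFS : (g @ \oo) [set v : 'cV[R]_n | `|v| = 1] by exists 0%N => // m _; exact: gS.
have [p [Sp clp]] := @sphere_compact (g @ \oo) _ hFS.
have p0 := hp p (closed_approx hcl hK1 hcz clp) (closed_approxN hcl hK2 hcz clp).
by move: Sp; rewrite /= p0 normr0 => /eqP; rewrite eq_sym oner_eq0.
Qed.
End T.

Section U.
Variable R : realType.

Lemma entry_le_norm m p (v : 'M[R]_(m,p)) i j : `|v i j| <= `|v|.
Proof.
change (`|v i j| <= mx_norm v); rewrite mx_normrE.
exact: (le_bigmax _ (fun ij : 'I_m * 'I_p => `|v ij.1 ij.2|) (i, j)).
Qed.

Lemma mulmx_norm_le m n (B : 'M[R]_(m,n)) (v : 'cV[R]_n) :
  `|B *m v| <= (\sum_i \sum_j `|B i j|) * `|v|.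
Proof.
change (mx_norm (B *m v) <= (\sum_i \sum_j `|B i j|) * `|v|); rewrite mx_normrE.
apply: bigmax_le => [|[i j] _]; first by rewrite mulr_ge0 // sumr_ge0 // => i _; rewrite sumr_ge0.
rewrite mxE /=; apply: le_trans (ler_norm_sum _ _ _) _.
apply: le_trans (_ : \sum_k `|B i k| * `|v| <= _).
  by apply: ler_sum => k _; rewrite normrM ler_wpM2l // entry_le_norm.
rewrite -mulr_suml ler_wpM2r // (bigD1 i) //= lerDl.
by apply: sumr_ge0 => k _; rewrite sumr_ge0.
Qed.

Lemma mulmx_cvg0 m n (B : 'M[R]_(m,n)) (u : nat -> 'cV[R]_n) :
  u @ \oo --> (0 : 'cV[R]_n) -> (fun k => B *m u k) @ \oo --> (0 : 'cV[R]_m).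
Proof.
move=> hu; apply: (squeeze0 (al := fun k => (\sum_i \sum_j `|B i j|) * `|u k|)).
  by move=> k; apply: mulmx_norm_le.
have h : (fun k => `|u k|) @ \oo --> (0 : R).
  rewrite -(@normr0 _ ('cV[R]_n)); exact: cvg_norm.
rewrite -[X in _ --> X](mulr0 (\sum_i \sum_j `|B i j|)).
exact: (@cvgM _ _ _ _ (fun _ => \sum_i \sum_j `|B i j|) (fun k => `|u k|) _ _ (cvg_cst _) h).
Qed.

Lemma Knn_mul n (K : set 'cV[R]_n) (A B : 'M[R]_n) : K_nonneg K A -> K_nonneg K B -> K_nonneg K (A *m B).
Proof. by move=> hA hB x hx; rewrite -mulmxA; apply: hA; apply: hB. Qed.

Lemma Knn_add n (K : set 'cV[R]_n) (A B : 'M[R]_n) : is_cone K -> is_convex_set K ->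
  K_nonneg K A -> K_nonneg K B -> K_nonneg K (A + B).
Proof. by move=> hc hv hA hB x hx; rewrite mulmxDl; apply: addK => //; [apply: hA | apply: hB]. Qed.

Lemma Knn_sum n (K : set 'cV[R]_n) k (f : 'I_k -> 'M[R]_n) : is_cone K -> is_convex_set K -> K 0 ->
  (forall j, K_nonneg K (f j)) -> K_nonneg K (\sum_(j < k) f j).
Proof.
move=> hc hv h0 hf x hx; rewrite mulmx_suml; apply: sumK => // j; exact: hf.
Qed.

End U.

Theorem theorem3p5 (R : realType) (n : nat) (K : set 'cV[R]_n)
    (A U V F G : 'M[R]_n) (b : 'cV[R]_n) :
  proper_cone K ->
  A \in unitmx ->
  K_regular_splitting K A U V -> convergent_splitting U V ->
  K_weak_regular_splitting_II K U F G -> convergent_splitting F G ->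
  V *m invmx F *m G = G *m invmx F *m V ->
  forall (s : nat -> nat) (x : nat -> 'cV[R]_n),
    (forall k, (1 <= s k)%N) ->
    (forall k, x k.+1 =
        (invmx F *m G) ^+ (s k) *m x k
        + \sum_(j < s k) ((invmx F *m G) ^+ j *m invmx F *m (V *m x k + b))) ->
    x @ \oo --> invmx A *m b.
Proof.
move=> [hc hcl hv hpt hsol] hA [defA hU hiU hV] hcUV [defU hF hiF hGF] hcFG _ s x hs hx.
have [u hu] := hsol.
have Ku : K u by apply: interior_subset.
have K0 : K 0 by have := hc 0 u (lexx 0) Ku; rewrite scale0r.
set iF := invmx F; set iU := invmx U.
set T := iF *m G; set P := G *m iF; set Q := V *m iF.
have iFF : forall v : 'cV[R]_n, iF *m (F *m v) = v by move=> v; rewrite mulmxA mulVmx // mul1mx.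
have FiF : forall v : 'cV[R]_n, F *m (iF *m v) = v by move=> v; rewrite mulmxA mulmxV // mul1mx.
have PF : forall v : 'cV[R]_n, P *m (F *m v) = F *m (T *m v).
  by move=> v; rewrite /P /T -!mulmxA iFF FiF.
have PT : forall (k : nat) (v : 'cV[R]_n), P ^+ k *m (F *m v) = F *m (T ^+ k *m v).
  elim=> [|k IH] v; first by rewrite !expr0 !mul1mx.
  by rewrite !exprSr -!mulmxE -[P ^+ k *m P *m _]mulmxA -[T ^+ k *m T *m _]mulmxA PF IH.
have Tlim : forall v, (fun k => T ^+ k *m v) @ \oo --> (0 : 'cV[R]_n) by apply: spectral.
have Plim : forall v, (fun k => P ^+ k *m v) @ \oo --> (0 : 'cV[R]_n).
  move=> v; have -> : (fun k => P ^+ k *m v) = (fun k => F *m (T ^+ k *m (iF *m v))).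
    by apply: funext => k; rewrite -PT FiF.
  exact: mulmx_cvg0 (Tlim _).
have [hP1 hP2] := neumann hcl hc hv K0 hGF Plim.
have Qpos : K_nonneg K Q by apply: Knn_mul.
have defP : 1 - P = U *m iF by rewrite defU mulmxBl /iF mulmxV.
have iP : invmx (1 - P) = F *m iU.
  have h1 : (1 - P) *m (F *m iU) = 1%:M.
    by rewrite defP -mulmxA (mulmxA iF F) mulVmx // mul1mx mulmxV.
  by rewrite -[RHS]mul1mx -(mulVmx hP1) -mulmxA h1 mulmx1.
set W := invmx (1 - P) *m Q.
have Wpos : K_nonneg K W by apply: Knn_mul.
set S := iU *m V.
have WF : forall v : 'cV[R]_n, W *m (F *m v) = F *m (S *m v).
  by move=> v; rewrite /W iP /Q /S -!mulmxA iFF.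
have WS : forall (k : nat) (v : 'cV[R]_n), W ^+ k *m (F *m v) = F *m (S ^+ k *m v).
  elim=> [|k IH] v; first by rewrite !expr0 !mul1mx.
  by rewrite !exprSr -!mulmxE -[W ^+ k *m W *m _]mulmxA -[S ^+ k *m S *m _]mulmxA WF IH.
have Slim : forall v, (fun k => S ^+ k *m v) @ \oo --> (0 : 'cV[R]_n) by move=> v; exact: (spectral hcUV v).
have Wlim : forall v, (fun k => W ^+ k *m v) @ \oo --> (0 : 'cV[R]_n).
  move=> v; have -> : (fun k => W ^+ k *m v) = (fun k => F *m (S ^+ k *m (iF *m v))).
    by apply: funext => k; rewrite -WS FiF.
  exact: mulmx_cvg0 (Slim _).
have [hW1 hW2] := neumann hcl hc hv K0 Wpos Wlim.
set Z := invmx (1 - W) *m invmx (1 - P).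
have Zpos : K_nonneg K Z by apply: Knn_mul.
have PW : (1 - P) *m (1 - W) = 1 - P - Q.
  by rewrite mulmxBr mulmx1 /W mulmxA mulmxV // mul1mx.
set z := Z *m u.
have Kz : K z by apply: Zpos.
have hzu : z - P *m z - Q *m z = u.
  have e1 : (1 - P - Q) *m z = z - P *m z - Q *m z by rewrite !mulmxBl mul1mx.
  rewrite -e1 -PW /z /Z !mulmxA -[(1 - P) *m (1 - W) *m invmx (1 - W)]mulmxA mulmxV //.
  by rewrite mulmx1 mulmxV // mul1mx.
have [r r0 hr] : exists2 r : R, 0 < r & forall v, `|u - v| < r -> K v.
  move: hu => /nbhs_ballP [r r0 hr]; exists r => // v hv0; apply: hr.
  by rewrite -ball_normE /=.
pose D := r + `|z| + 1.
have D0 : 0 < D by rewrite /D; have := normr_ge0 z; lra.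
pose eps := r / D.
have eps0 : 0 < eps by rewrite divr_gt0.
have eps1 : eps < 1 by rewrite /eps ltr_pdivrMr // mul1r /D; have := normr_ge0 z; lra.
have epsz : eps * `|z| < r.
  rewrite /eps mulrAC ltr_pdivrMr //; rewrite /D; have := normr_ge0 z; nra.
set d := u - eps *: z.
have Kd : K d by apply: hr; rewrite /d opprB addrC subrK normrZ ger0_norm // ltW.
set th := 1 - eps.
have th0 : 0 <= th by rewrite /th subr_ge0 ltW.
have th1 : th < 1 by rewrite /th; lra.
have hd : th *: z - P *m z - Q *m z = d.
  by rewrite /d -hzu /th scalerBl scale1r (addrAC z) (addrAC (z - P *m z)).
pose N (m : nat) := P ^+ m + \sum_(j < m) P ^+ j *m Q.
have NS : forall m, N m.+1 = P *m N m + Q.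
  move=> m; rewrite /N big_ord_recl expr0 mul1mx mulmxDr mulmx_sumr exprS -mulmxE.
  have -> : \sum_(i < m) P ^+ (bump 0 i) *m Q = \sum_(i < m) P *m (P ^+ i *m Q).
    by apply: eq_bigr => i _; rewrite /bump /= exprS -mulmxE mulmxA.
  by rewrite [Q + _]addrC addrA.
have Npos : forall m, K_nonneg K (N m).
  move=> m; apply: Knn_add => //; first exact: powK.
  by apply: Knn_sum => // j; apply: Knn_mul => //; exact: powK.
have claim1 : forall m, K (z - N m *m z).
  elim=> [|m IH]; first by rewrite /N expr0 big_ord0 addr0 mul1mx subrr.
  have -> : z - N m.+1 *m z = eps *: z + (d + P *m (z - N m *m z)).
    rewrite NS mulmxDl mulmxBr -hd /th scalerBl scale1r -mulmxA.
    set a := P *m z; set c := P *m (N m *m z); set q := Q *m z.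
    by apply/matrixP => i j; rewrite !mxE; ring.
  apply: addK => //; first exact: hc (ltW eps0) Kz.
  by apply: addK => //; apply: hGF.
have claim2 : forall m, K (th *: z - N m.+1 *m z).
  move=> m; have -> : th *: z - N m.+1 *m z = d + P *m (z - N m *m z).
    rewrite NS mulmxDl mulmxBr -hd -mulmxA.
    set a := P *m z; set c := P *m (N m *m z); set q := Q *m z.
    by apply/matrixP => i j; rewrite !mxE; ring.
  by apply: addK => //; apply: hGF.
set xs := invmx A *m b.
have hAxs : A *m xs = b by rewrite /xs mulmxA mulmxV // mul1mx.
have Uxs : U *m xs = V *m xs + b by rewrite -hAxs defA mulmxBl addrC subrK.
have UF : forall v : 'cV[R]_n, U *m v = (1 - P) *m (F *m v) by move=> v; rewrite defP -mulmxA iFF.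
have tel : forall (m : nat) (y : 'cV[R]_n), \sum_(j < m) P ^+ j *m ((1 - P) *m y) = y - P ^+ m *m y.
  move=> m y; elim: m => [|m IH]; first by rewrite big_ord0 expr0 mul1mx subrr.
  rewrite big_ord_recr /= IH mulmxBl mul1mx mulmxBr exprSr -mulmxE -[P ^+ m *m P *m y]mulmxA.
  set a := P ^+ m *m y; set c := P ^+ m *m (P *m y).
  by apply/matrixP => i j; rewrite !mxE; ring.
have hfix : forall m, F *m xs = P ^+ m *m (F *m xs) + \sum_(j < m) P ^+ j *m (V *m xs + b).
  by move=> m; rewrite -Uxs UF tel addrC subrK.
have hxF : forall k, F *m x k.+1 = P ^+ (s k) *m (F *m x k) + \sum_(j < s k) P ^+ j *m (V *m x k + b).
  move=> k; rewrite hx mulmxDr mulmx_sumr -PT; congr (_ + _).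
  by apply: eq_bigr => j _; rewrite -mulmxA -PT FiF.
pose f k := F *m (x k - xs).
have hf : forall k, f k.+1 = N (s k) *m f k.
  move=> k; rewrite /f mulmxBr hxF (hfix (s k)) /N mulmxDl mulmx_suml.
  have -> : \sum_(i < s k) P ^+ i *m Q *m (F *m (x k - xs)) =
      \sum_(i < s k) (P ^+ i *m (V *m x k + b) - P ^+ i *m (V *m xs + b)).
    apply: eq_bigr => j _; rewrite -mulmxA /Q -mulmxA iFF -mulmxBr.
    by congr (_ *m _); rewrite !mulmxBr opprD addrACA subrr addr0.
  rewrite sumrB !mulmxBr.
  set a1 := P ^+ s k *m (F *m x k); set a2 := P ^+ s k *m (F *m xs).
  set S1 := \sum_(j < s k) _; set S2 := \sum_(j < s k) _.
  by apply/matrixP => i j; rewrite !mxE; ring.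
have Kzu : K (z - u).
  have -> : z - u = P *m z + Q *m z.
    rewrite -hzu; set a := P *m z; set q := Q *m z.
    by apply/matrixP => i j; rewrite !mxE; ring.
  apply: addK => //; [exact: hGF | exact: Qpos].
have bnd : forall v : 'cV[R]_n, exists t : R, 0 <= t /\ K (t *: z + v) /\ K (t *: z - v).
  move=> v; pose t := (`|v| + 1) / r.
  have t0 : 0 < t by rewrite divr_gt0 // ltr_pwDr // normr_ge0.
  have hball : forall w : 'cV[R]_n, `|w| = `|v| -> K (t *: z + w).
    move=> w hw.
    have Kw : K (u + t^-1 *: w).
      apply: hr; rewrite opprD addNKr normrN normrZ hw ger0_norm ?invr_ge0 ?ltW //.
      rewrite /t invf_div mulrAC ltr_pdivrMr ?ltr_pwDr ?normr_ge0 //.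
      by rewrite ltr_pM2l // ltrDl.
    have -> : t *: z + w = t *: (u + t^-1 *: w) + t *: (z - u).
      rewrite scalerDr scalerA divff ?gt_eqF // scale1r scalerBr.
      set a := t *: z; set c := t *: u.
      by apply/matrixP => i j; rewrite !mxE; ring.
    by apply: addK => //; apply: hc => //; apply: ltW.
  by exists t; split; [exact: ltW | split; apply: hball => //; exact: normrN].
have [t0 [t00 [ht1 ht2]]] := bnd (f 0%N).
have hB : forall k, K (t0 * th ^+ k *: z + f k) /\ K (t0 * th ^+ k *: z - f k).
  elim=> [|k [IH1 IH2]]; first by rewrite expr0 mulr1.
  have [m hm] : exists m, s k = m.+1 by exists (s k).-1; rewrite prednK // hs.
  have c0 : 0 <= t0 * th ^+ k by rewrite mulr_ge0 // exprn_ge0.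
  have hK2 := hc _ _ c0 (claim2 m).
  rewrite hf hm exprSr mulrA -scalerA; split.
  - have -> : (t0 * th ^+ k) *: (th *: z) + N m.+1 *m f k =
        (t0 * th ^+ k) *: (th *: z - N m.+1 *m z) + N m.+1 *m ((t0 * th ^+ k) *: z + f k).
      rewrite mulmxDr -scalemxAr.
      set a := th *: z; set c := N m.+1 *m z; set g := N m.+1 *m f k.
      by apply/matrixP => i j; rewrite !mxE; ring.
    by apply: addK => //; apply: Npos.
  - have -> : (t0 * th ^+ k) *: (th *: z) - N m.+1 *m f k =
        (t0 * th ^+ k) *: (th *: z - N m.+1 *m z) + N m.+1 *m ((t0 * th ^+ k) *: z - f k).
      rewrite mulmxBr -scalemxAr.
      set a := th *: z; set c := N m.+1 *m z; set g := N m.+1 *m f k.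
      by apply/matrixP => i j; rewrite !mxE; ring.
    by apply: addK => //; apply: Npos.
have [C [C0 hC]] := @order_bound R n K z hcl hc hpt.
have hf0 : f @ \oo --> (0 : 'cV[R]_n).
  apply: (squeeze0 (al := fun k => C * (t0 * th ^+ k))).
    move=> k; apply: hC; [by rewrite mulr_ge0 // exprn_ge0 | exact: (hB k).1 | exact: (hB k).2].
  have h1 : (fun k => th ^+ k) @ \oo --> (0 : R) by apply: cvg_expr; rewrite ger0_norm.
  have -> : (0 : R) = C * (t0 * 0) by rewrite !mulr0.
  exact: (@cvgM _ _ _ _ (fun _ => C) (fun k => t0 * th ^+ k) _ _ (cvg_cst _)
    (@cvgM _ _ _ _ (fun _ => t0) (fun k => th ^+ k) _ _ (cvg_cst _) h1)).
have -> : x = (fun k => iF *m f k + xs) by apply: funext => k; rewrite /f iFF subrK.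
rewrite -[X in _ --> X]add0r; apply: cvgD; [exact: mulmx_cvg0 | exact: cvg_cst].
Qed.
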